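(* Consider the faulty-starter delivery problem described in the context, with finisher starting position $(x,y)$, $y\ge0$. The competitive ratio of algorithm $\mathcal{A}_0$ is $$\mathrm{CR}_{\mathcal{A}_0}=\frac{1+\sqrt{x^2+y^2}}{\max\left\{1,\sqrt{(x-1)^2+y^2}\right\}}.$$
   Context: Setting. In the plane let $S=(0,0)$ and $T=(1,0)$. A ''starter'' drone carrying a package starts at $S$ at time $0$ and moves at unit speed along $\overline{ST}$ towards $T$. At an unknown time $t\in[0,1]$ it fails and stays forever at $(t,0)$ with the package. A ''finisher'' drone starts at time $0$ at $P=(x,y)$ with $y\ge0$, moves at unit speed and can stop and turn instantaneously. The package can be handed over only when the drones are co-located; it is delivered at the first time the finisher, carrying the package, is at $T$. An online algorithm $\mathcal{A}$ specifies the finisher's trajectory using only $(x,y)$; $A(t)$ is its delivery time for fail time $t$. $\mathrm{Opt}(t)=\max\{1,\sqrt{(x-t)^2+y^2}+1-t\}$ is the optimal offline delivery time. $\mathrm{CR}_{\mathcal{A}}(t)=A(t)/\mathrm{Opt}(t)$ and $\mathrm{CR}_{\mathcal{A}}=\sup_{0\le t\le1}\mathrm{CR}_{\mathcal{A}}(t)$. Algorithm $\mathcal{A}_0$: the finisher goes straight to $S$, then moves along $\overline{ST}$ towards $T$ until it finds the package, then continues to $T$. *)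

(* Defs.v *)
From Stdlib Require Import Reals Lra.
Open Scope R_scope.

Definition dist2 (a b c d : R) : R := sqrt ((a - c)^2 + (b - d)^2).

(* S = (0,0), T = (1,0); finisher starts at P = (x,y), y >= 0;
   the starter fails at time t in [0,1] and the package stays at (t,0). *)

Definition Opt (x y t : R) : R := Rmax 1 (dist2 x y t 0 + 1 - t).

(* Algorithm A0: the finisher goes straight to S (distance |PS|, arrival at
   time |PS|), then moves along ST towards T at unit speed.  Along ST it is
   behind the starter (which moves at unit speed, started at the same time
   from S), so it reaches the package at (t,0) exactly when it has travelled
   t further along ST, i.e. at time |PS| + t; it then carries the package the
   remaining distance 1 - t to T. *)
Definition A0_pickup (x y t : R) : R := dist2 x y 0 0 + t.
Definition A0 (x y t : R) : R := A0_pickup x y t + (1 - t).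

Definition CR_A0_at (x y t : R) : R := A0 x y t / Opt x y t.

(* The set of values CR_A0(t), t in [0,1]; CR_A0 is its supremum. *)
Definition CR_A0_values (x y : R) : R -> Prop :=
  fun r => exists t, 0 <= t <= 1 /\ r = CR_A0_at x y t.

(* Main.v *)
Require Import Defs.
From Stdlib Require Import Reals Lra.
Open Scope R_scope.

Lemma key (x y t : R) : t <= 1 ->
  sqrt ((x - 1) ^ 2 + y ^ 2) <= sqrt ((x - t) ^ 2 + (y - 0) ^ 2) + 1 - t.
Proof.
  intros ht.
  assert (Hd : exists s, s = sqrt ((x - t) ^ 2 + (y - 0) ^ 2)) by (eexists; reflexivity). destruct Hd as [s Hs]. rewrite <- Hs.
  assert (hs0 : 0 <= s) by (rewrite Hs; apply sqrt_pos).
  assert (hs2 : s * s = (x - t) ^ 2 + (y - 0) ^ 2).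
  { rewrite Hs; apply sqrt_sqrt; pose proof (pow2_ge_0 (x - t)); pose proof (pow2_ge_0 (y - 0)); lra. }
  assert (habs : t - x <= s) by nra.
  rewrite <- (sqrt_pow2 (s + 1 - t)) by lra.
  apply sqrt_le_1_alt. nra.
Qed.

Lemma Rmax_mono (a b : R) : a <= b -> Rmax 1 a <= Rmax 1 b.
Proof. intros; unfold Rmax; destruct Rle_dec; destruct Rle_dec; lra. Qed.

Lemma Rmax_pos (a : R) : 0 < Rmax 1 a.
Proof. unfold Rmax; destruct Rle_dec; lra. Qed.

Theorem theorem1 (x y : R) (hy : 0 <= y) :
  is_lub (CR_A0_values x y)
    ((1 + sqrt (x ^ 2 + y ^ 2)) / Rmax 1 (sqrt ((x - 1) ^ 2 + y ^ 2))).
Proof.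
  assert (hS : dist2 x y 0 0 = sqrt (x ^ 2 + y ^ 2)).
  { unfold dist2; f_equal; ring. }
  assert (hn : 0 <= 1 + sqrt (x ^ 2 + y ^ 2)).
  { pose proof (sqrt_pos (x ^ 2 + y ^ 2)); lra. }
  split.
  - intros r [t [[h0 h1] ->]].
    unfold CR_A0_at, A0, A0_pickup, Opt. rewrite hS.
    replace (sqrt (x ^ 2 + y ^ 2) + t + (1 - t)) with (1 + sqrt (x ^ 2 + y ^ 2)) by ring.
    unfold Rdiv; apply Rmult_le_compat_l; [exact hn|].
    apply Rinv_le_contravar; [apply Rmax_pos|].
    apply Rmax_mono. unfold dist2. apply key; lra.
  - intros b Hb; apply Hb. exists 1; split; [lra|].
    unfold CR_A0_at, A0, A0_pickup, Opt. rewrite hS.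
    unfold dist2.
    replace ((y - 0) ^ 2) with (y ^ 2) by ring.
    f_equal; [ring|]. f_equal. ring.
Qed.
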